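(* Every $\Delta$-matroid representable over a finite field of characteristic two is strong.
   Context: A $\Delta$-matroid is a pair $(E,\mathcal{B})$, $E$ finite, $\mathcal{B}$ a nonempty family of subsets, such that for all $B,B'\in\mathcal{B}$ and $x\in B\triangle B'$ there is $y\in B\triangle B'$ with $B\triangle\{x,y\}\in\mathcal{B}$; it is strong if such $y$ can always be chosen with both $B\triangle\{x,y\},B'\triangle\{x,y\}\in\mathcal{B}$. For a symmetric or skew-symmetric matrix $\mathbf{A}$ over a field $K$ indexed by $E$, $D(\mathbf{A})=(E,\{I\subseteq E:\mathbf{A}[I]\text{ nonsingular}\})$ (the empty principal submatrix counts as nonsingular). For $X\subseteq E$, the twist $D*X$ has bases $\{B\triangle X:B\in\mathcal{B}\}$. $D$ is representable over $K$ if $D=D(\mathbf{A})*X$ for some symmetric or skew-symmetric matrix $\mathbf{A}$ over $K$ and some $X\subseteq E$. *)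

(* Defs.v *)
From HB Require Import structures.
From mathcomp Require Import all_boot all_order all_algebra all_field.
Set Implicit Arguments. Unset Strict Implicit. Unset Printing Implicit Defensive.
Import GRing.Theory.
Local Open Scope ring_scope.

Definition symdiff (T : finType) (A B : {set T}) : {set T} :=
  (A :\: B) :|: (B :\: A).

Section DeltaMatroids.
Variable E : finType.

Definition delta_matroid (B : {set {set E}}) : Prop :=
  B != set0 /\
  forall B1 B2 x, B1 \in B -> B2 \in B -> x \in symdiff B1 B2 ->
    exists y, y \in symdiff B1 B2 /\ symdiff B1 [set x; y] \in B.

Definition strong_delta_matroid (B : {set {set E}}) : Prop :=
  B != set0 /\
  forall B1 B2 x, B1 \in B -> B2 \in B -> x \in symdiff B1 B2 ->
    exists y, y \in symdiff B1 B2 /\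
      symdiff B1 [set x; y] \in B /\ symdiff B2 [set x; y] \in B.

Definition twist (B : {set {set E}}) (X : {set E}) : {set {set E}} :=
  [set symdiff Bs X | Bs in B].

Variable K : fieldType.

Definition symmetric_mx (A : E -> E -> K) : Prop :=
  forall i j, A i j = A j i.

(* Skew-symmetric: A^T = -A with zero diagonal (Bouchet's convention). *)
Definition skew_symmetric_mx (A : E -> E -> K) : Prop :=
  (forall i j, A j i = - A i j) /\ (forall i, A i i = 0).

Definition principal_submx (A : E -> E -> K) (I : {set E}) : 'M[K]_#|I| :=
  \matrix_(i < #|I|, j < #|I|) A (enum_val i) (enum_val j).

(* A[I] nonsingular; the empty principal submatrix has det 1. *)
Definition nonsingular_principal (A : E -> E -> K) (I : {set E}) : bool :=
  \det (principal_submx A I) != 0.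

Definition DA (A : E -> E -> K) : {set {set E}} :=
  [set I : {set E} | nonsingular_principal A I].

Definition representable_over (B : {set {set E}}) : Prop :=
  exists (A : E -> E -> K) (X : {set E}),
    (symmetric_mx A \/ skew_symmetric_mx A) /\ B = twist (DA A) X.

End DeltaMatroids.

(* Main.v *)
Require Import Defs.
From HB Require Import structures.
From mathcomp Require Import all_boot all_order all_algebra all_field.
Import GRing.Theory.
From mathcomp Require Import all_boot all_order all_algebra all_field all_fingroup.
From mathcomp Require Import ring.
Set Implicit Arguments. Unset Strict Implicit. Unset Printing Implicit Defensive.
Import GRing.Theory.
Local Open Scope ring_scope.

Section Gen.
Variable K : fieldType.

Lemma det_reindex m n (h : 'I_m -> 'I_n) (M : 'M[K]_n) : injective h -> m = n ->
  \det (\matrix_(i, j) M (h i) (h j)) = \det M.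
Proof.
move=> hinj e; subst m.
pose s := perm hinj.
have -> : (\matrix_(i, j) M (h i) (h j)) = row_perm s (col_perm s M).
  by apply/matrixP => i j; rewrite !mxE !permE.
rewrite row_permE col_permE !det_mulmx !det_perm odd_permV.
by rewrite mulrCA -signr_addb addbb expr0 mulr1.
Qed.

Variable E : finType.

Definition matE (F : E -> E -> K) : 'M[K]_#|E| :=
  \matrix_(i, j) F (enum_val i) (enum_val j).
Definition RTf (A : E -> E -> K) (T : {set E}) : E -> E -> K :=
  fun e f => if e \in T then A e f else (e == f)%:R.

Lemma det_principal_RT A T :
  \det (principal_submx A T) = \det (matE (RTf A T)).
Proof.
pose h (k : 'I_(#|T| + #|~: T|)) : 'I_#|E| :=
  match split k with inl i => enum_rank (enum_val i) | inr j => enum_rank (enum_val j) end.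
have hinj : injective h.
  move=> k1 k2; rewrite /h -(splitK k1) -(splitK k2).
  case: (split k1) => a; case: (split k2) => b; rewrite !unsplitK => /enum_rank_inj e.
  - by have -> := enum_val_inj e.
  - by move: (enum_valP a) (enum_valP b); rewrite e !inE; case: (_ \in T).
  - by move: (enum_valP a) (enum_valP b); rewrite e !inE; case: (_ \in T).
  - by have -> := enum_val_inj e.
rewrite -(det_reindex (matE (RTf A T)) hinj (cardsC T)).
have -> : (\matrix_(i, j) matE (RTf A T) (h i) (h j)) =
  block_mx (principal_submx A T)
    (\matrix_(i < #|T|, j < #|~: T|) A (enum_val i) (enum_val j)) 0 1%:M.
  apply/matrixP => i j; rewrite -(splitK i) -(splitK j).
  case: (split i) => a; case: (split j) => b; rewrite mxE /h !unsplitK /=.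
  - by rewrite block_mxEul !mxE !enum_rankK /RTf enum_valP.
  - by rewrite block_mxEur !mxE !enum_rankK /RTf enum_valP.
  - rewrite block_mxEdl !mxE !enum_rankK /RTf.
    have := enum_valP a; rewrite inE => /negbTE ->.
    case: eqP => // e; have := enum_valP a; rewrite inE e enum_valP //.
  - rewrite block_mxEdr !mxE !enum_rankK /RTf.
    have := enum_valP a; rewrite inE => /negbTE ->.
    by rewrite (inj_eq enum_val_inj).
by rewrite det_ublock det1 mulr1.
Qed.

Hypothesis Hc : (2%N \in [pchar K]).

Lemma char2_add (x : K) : x + x = 0.
Proof. by rewrite -mulr2n -mulr_natr (pcharf0 Hc) mulr0. Qed.
Lemma char2_opp (x : K) : - x = x.
Proof. by apply/eqP; rewrite eq_sym -subr_eq0 opprK char2_add. Qed.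

Definition QX (A : E -> E -> K) X := matE (RTf A X).
Definition SX (A : E -> E -> K) X := matE (RTf A (~: X)).
Definition piv A X : E -> E -> K :=
  fun e f => (SX A X *m invmx (QX A X)) (enum_rank e) (enum_rank f).

Lemma sum_delta (F : 'I_#|E| -> K) i : \sum_k (i == k)%:R * F k = F i.
Proof.
rewrite (bigD1 i) //= eqxx mul1r big1 ?addr0 // => k hk.
by rewrite eq_sym (negbTE hk) mul0r.
Qed.

Lemma rowdelta (M N : 'M[K]_#|E|) r c : (forall l, M r l = (r == l)%:R) ->
  (M *m N) r c = N r c.
Proof. by move=> h; rewrite mxE -(sum_delta (fun k => N k c)); apply: eq_bigr => k _; rewrite h. Qed.

Lemma piv_det A X T : \det (QX A X) != 0 ->
  \det (matE (RTf (piv A X) T)) * \det (QX A X) = \det (matE (RTf A (symdiff T X))).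
Proof.
move=> hQ; have uQ : QX A X \in unitmx by rewrite unitmxE unitfE.
rewrite -det_mulmx; congr (\det _); apply/matrixP => i j.
rewrite [RHS]mxE /RTf /symdiff !inE.
case hT: (enum_val i \in T) => /=.
- transitivity ((SX A X *m invmx (QX A X) *m QX A X) i j).
    rewrite !mxE; apply: eq_bigr => k _; rewrite !mxE /RTf hT /piv !enum_valK.
    by rewrite mxE.
  rewrite mulmxKV // /SX mxE /RTf inE.
  by case: (enum_val i \in X).
- transitivity ((QX A X) i j); last first.
    by rewrite /QX mxE /RTf; case: (enum_val i \in X).
  rewrite -[QX A X in RHS]mul1mx [RHS]mxE !mxE; apply: eq_bigr => k _.
  by rewrite !mxE /RTf hT (inj_eq enum_val_inj).
Qed.

Lemma QS_pt A X (k i j : 'I_#|E|) :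
  QX A X k i * SX A X k j =
  (k == j)%:R * (if enum_val k \in X then A (enum_val k) (enum_val i) else 0) +
  (k == i)%:R * (if enum_val k \in X then 0 else A (enum_val k) (enum_val j)).
Proof.
rewrite /QX /SX !mxE /RTf inE !(inj_eq enum_val_inj).
by case: (enum_val k \in X) => /=; rewrite ?mulr0 ?addr0 ?add0r // mulrC.
Qed.

Lemma SQ_pt A X (k i j : 'I_#|E|) :
  SX A X k i * QX A X k j =
  (k == i)%:R * (if enum_val k \in X then A (enum_val k) (enum_val j) else 0) +
  (k == j)%:R * (if enum_val k \in X then 0 else A (enum_val k) (enum_val i)).
Proof.
rewrite /QX /SX !mxE /RTf inE !(inj_eq enum_val_inj).
by case: (enum_val k \in X) => /=; rewrite ?mulr0 ?addr0 ?add0r // mulrC.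
Qed.

Lemma QS_comm A X : (forall e f, A e f = A f e) ->
  (QX A X)^T *m SX A X = (SX A X)^T *m QX A X.
Proof.
move=> hA; apply/matrixP => i j; rewrite !mxE.
under eq_bigr do rewrite mxE QS_pt.
under [RHS]eq_bigr do rewrite mxE SQ_pt.
rewrite !big_split /=.
rewrite (eq_bigl _ _ (fun k => erefl)).
have sd : forall (F : 'I_#|E| -> K) c, \sum_k (k == c)%:R * F k = F c.
  by move=> F c; rewrite -(sum_delta F c); apply: eq_bigr => k _; rewrite eq_sym.
rewrite !sd (hA (enum_val j)).
case: (enum_val i \in X); case: (enum_val j \in X) => //=;
  rewrite ?addr0 ?add0r ?char2_add //.
Qed.

Lemma piv_sym A X : (forall e f, A e f = A f e) -> \det (QX A X) != 0 ->
  forall e f, piv A X e f = piv A X f e.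
Proof.
move=> hA hQ; have uQ : QX A X \in unitmx by rewrite unitmxE unitfE.
have hP : (SX A X *m invmx (QX A X))^T = SX A X *m invmx (QX A X).
  rewrite trmx_mul trmx_inv.
  rewrite -[(SX A X)^T](mulmxK uQ) -QS_comm // mulmxA mulKmx ?unitmx_tr //.
by move=> e f; rewrite /piv -[in LHS]hP mxE.
Qed.


Lemma piv_rel A X : \det (QX A X) != 0 -> forall i j, i \in X -> j \in X ->
  \sum_(k in X) A i k * piv A X k j = (i == j)%:R.
Proof.
move=> hQ i j hi hj; have uQ : QX A X \in unitmx by rewrite unitmxE unitfE.
set Qi := invmx (QX A X).
have h1 : forall k, k \in X -> piv A X k j = Qi (enum_rank k) (enum_rank j).
  move=> k hk; rewrite /piv rowdelta // => l.
  by rewrite /SX mxE /RTf !inE enum_rankK hk /= -[in RHS](inj_eq enum_val_inj) enum_rankK.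
have h2 : forall l c : 'I_#|E|, enum_val l \notin X -> Qi l c = (l == c)%:R.
  move=> l c hl; rewrite -(@rowdelta (QX A X) Qi l c) => [|l'].
    by rewrite mulmxV // mxE.
  by rewrite /QX mxE /RTf (negbTE hl) (inj_eq enum_val_inj).
have h3 := congr1 (fun M : 'M[K]_#|E| => M (enum_rank i) (enum_rank j)) (mulmxV uQ).
rewrite /= [RHS]mxE (inj_eq enum_rank_inj) in h3; rewrite -h3 mxE.
rewrite (bigID (fun l => enum_val l \in X)) /= [X in _ = _ + X]big1 ?addr0; last first.
  move=> l hl; rewrite h2 //; case: eqP => [e|]; last by rewrite mulr0.
  by move: hl; rewrite e enum_rankK hj.
rewrite (reindex (enum_val : 'I_#|E| -> E)); last by apply: onW_bij; exact: enum_val_bij.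
apply: eq_bigr => l hl; rewrite h1 // enum_valK /QX mxE /RTf enum_rankK hi.
by [].
Qed.


Lemma sym_sum2 (U : {set E}) (f : E -> E -> K) : (forall y z, f y z = f z y) ->
  \sum_(y in U) \sum_(z in U) f y z = \sum_(y in U) f y y.
Proof.
move=> hf; move: {2}#|U| (erefl #|U|) => m; elim: m U => [|m IH] U hU.
  by move/eqP: hU; rewrite cards_eq0 => /eqP ->; rewrite !big_set0.
have /set0Pn [w hw] : U != set0 by rewrite -card_gt0 hU.
have hU' : #|U :\ w| = m by move: hU; rewrite (cardsD1 w) hw => [[]].
under eq_bigr => y hy do rewrite (big_setD1 w hw).
rewrite big_split /= (big_setD1 w hw) /= (big_setD1 w hw) /= IH //.
rewrite [in RHS](big_setD1 w hw) /=.
have -> : \sum_(i in U :\ w) f i w = \sum_(i in U :\ w) f w i.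
  by apply: eq_bigr => i _; rewrite hf.
by rewrite -addrA [X in _ + X]addrA char2_add add0r.
Qed.

Lemma sum_sq (U : {set E}) (g : E -> K) :
  (\sum_(y in U) g y) ^+ 2 = \sum_(y in U) g y ^+ 2.
Proof.
apply: (big_morph (fun x : K => x ^+ 2)); last by rewrite expr0n.
by move=> u v; rewrite sqrrD -mulr_natr (pcharf0 Hc) mulr0 addr0.
Qed.

Definition d2 (a : E -> E -> K) x y :=
  if x == y then a x x else a x x * a y y - a x y * a y x.

Lemma local_half (a b : E -> E -> K) (U : {set E}) x :
  (forall i j, a i j = a j i) -> (forall i j, b i j = b j i) ->
  (forall i j, i \in U -> j \in U -> \sum_(k in U) a i k * b k j = (i == j)%:R) ->
  x \in U -> a x x = 0 ->
  exists2 y, y \in U & d2 a x y != 0 /\ d2 b x y != 0.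
Proof.
move=> ha hb hr hx ax0.
pose F y := a x y ^+ 2 * (b x x * b y y + b x y ^+ 2).
have e1 : \sum_(y in U) a x y ^+ 2 * b y y = 0.
  transitivity (\sum_(y in U) \sum_(z in U) a x y * b y z * a z x).
    rewrite sym_sum2; first by apply: eq_bigr => y _; rewrite (ha y x); ring.
    by move=> y z; rewrite (hb z y) (ha x z) (ha y x); ring.
  rewrite exchange_big /=.
  under eq_bigr => z hz do rewrite -big_distrl /= hr //.
  rewrite (big_setD1 x hx) /= eqxx mul1r ax0 add0r big1 // => z.
  by rewrite !inE => /andP [hzx _]; rewrite eq_sym (negbTE hzx) mul0r.
have hs : \sum_(y in U) F y = 1.
  transitivity (b x x * \sum_(y in U) a x y ^+ 2 * b y y +
                \sum_(y in U) (a x y * b y x) ^+ 2).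
    rewrite big_distrr -big_split /=; apply: eq_bigr => y _.
    by rewrite /F (hb y x); ring.
  by rewrite e1 mulr0 add0r -sum_sq hr // eqxx expr1n.
have [y hy hF] : exists2 y, y \in U & F y != 0.
  case: (pickP (fun y => (y \in U) && (F y != 0))) => [y /andP [hy hF]|h0].
    by exists y.
  move: hs; rewrite big1 => [/eqP|y hy]; first by rewrite eq_sym oner_eq0.
  by move: (h0 y); rewrite hy /= => /negbFE /eqP.
exists y => //.
move: hF; rewrite /F mulf_eq0 negb_or => /andP [hxy hb2].
case: (eqVneq x y) hxy => [<-|nxy hxy]; first by rewrite ax0 expr2 mul0r eqxx.
rewrite /d2 (negbTE nxy) ax0 mul0r sub0r oppr_eq0 (ha y x) -expr2 hxy; split=> //.
by rewrite (hb y x) -expr2 char2_opp.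
Qed.

Lemma local (a b : E -> E -> K) (U : {set E}) x :
  (forall i j, a i j = a j i) -> (forall i j, b i j = b j i) ->
  (forall i j, i \in U -> j \in U -> \sum_(k in U) a i k * b k j = (i == j)%:R) ->
  x \in U ->
  exists2 y, y \in U & d2 a x y != 0 /\ d2 b x y != 0.
Proof.
move=> ha hb hr hx.
case: (eqVneq (a x x) 0) => ax; first exact: local_half.
case: (eqVneq (b x x) 0) => bx.
  have hr' : forall i j, i \in U -> j \in U ->
      \sum_(k in U) b i k * a k j = (i == j)%:R.
    move=> i j hi hj; rewrite eq_sym -(hr j i) //; apply: eq_bigr => k _.
    by rewrite mulrC (ha k j) (hb i k).
  by have [y hy [h1 h2]] := local_half hb ha hr' hx bx; exists y.
by exists x => //; rewrite /d2 eqxx.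
Qed.


Lemma det_sz1 m (M : 'M[K]_m) (i0 : 'I_m) : m = 1%N -> \det M = M i0 i0.
Proof. by case: m M i0 => [|[|m]] M i0 // _; rewrite det_mx11 (ord1 i0). Qed.

Lemma det2 (M : 'M[K]_2) :
  \det M = M ord0 ord0 * M ord_max ord_max - M ord0 ord_max * M ord_max ord0.
Proof.
have l1 : forall z : 'I_1, lift ord0 z = ord_max :> 'I_2.
  by move=> z; apply: val_inj; rewrite /= (ord1 z).
have l2 : forall z : 'I_1, lift ord_max z = ord0 :> 'I_2.
  by move=> z; apply: val_inj; rewrite /= (ord1 z).
rewrite (expand_det_row _ ord0) !big_ord_recl big_ord0 addr0 /cofactor !det_mx11 !mxE /=.
rewrite !l1 !l2 /bump /= expr0 expr1; ring.
Qed.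

Lemma det_sz2 m (M : 'M[K]_m) (i0 i1 : 'I_m) : m = 2%N -> i0 != i1 ->
  \det M = M i0 i0 * M i1 i1 - M i0 i1 * M i1 i0.
Proof.
case: m M i0 i1 => [|[|[|m]]] M i0 i1 // _ hne; rewrite det2.
have h : forall i : 'I_2, (i == ord0) || (i == ord_max).
  by case=> [[|[|?]] ?].
move: (h i0) (h i1) hne.
by do 2 case/orP => /eqP ->; rewrite ?eqxx //= => _; ring.
Qed.

Lemma det_pair (a : E -> E -> K) x y :
  \det (principal_submx a [set x; y]) = d2 a x y.
Proof.
have hx : x \in [set x; y] by rewrite !inE eqxx.
have hy : y \in [set x; y] by rewrite !inE eqxx orbT.
rewrite /d2; case: eqP => [exy|nxy].
  rewrite (det_sz1 _ (enum_rank_in hx x)); last by rewrite cards2 exy eqxx.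
  by rewrite mxE (enum_rankK_in hx hx).
have nxy' : x != y by apply/eqP.
rewrite (det_sz2 _ (i0 := enum_rank_in hx x) (i1 := enum_rank_in hx y)).
- by rewrite !mxE (enum_rankK_in hx hx) (enum_rankK_in hx hy).
- by rewrite cards2 nxy'.
apply: contra nxy' => /eqP e.
by rewrite -(enum_rankK_in hx hx) e (enum_rankK_in hx hy).
Qed.


Lemma symdiffE (T : finType) (A B : {set T}) z :
  (z \in symdiff A B) = (z \in A) (+) (z \in B).
Proof. by rewrite /symdiff !inE; case: (z \in A); case: (z \in B). Qed.

Lemma DA_RT (A : E -> E -> K) T : (T \in DA A) = (\det (matE (RTf A T)) != 0).
Proof. by rewrite /DA inE /nonsingular_principal det_principal_RT. Qed.

Lemma strong_DA (A : E -> E -> K) : (forall e f, A e f = A f e) ->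
  forall B1 B2 x, B1 \in DA A -> B2 \in DA A -> x \in symdiff B1 B2 ->
  exists y, y \in symdiff B1 B2 /\
    symdiff B1 [set x; y] \in DA A /\ symdiff B2 [set x; y] \in DA A.
Proof.
move=> hA B1 B2 x h1 h2 hx.
rewrite DA_RT in h1; rewrite DA_RT in h2.
set U := symdiff B1 B2 in hx *.
have hQ1 : \det (QX A B1) != 0 := h1.
pose A1 := piv A B1.
have hA1 := piv_sym hA hQ1.
have hU : \det (QX A1 U) != 0.
  have := piv_det (U) hQ1.
  have -> : symdiff U B1 = B2.
    by apply/setP => z; rewrite !symdiffE; case: (z \in B1); case: (z \in B2).
  move=> e; apply/eqP => h0; move: h2; rewrite -e /QX h0 mul0r eqxx.
  by [].
pose A2 := piv A1 U.
have hA2 := piv_sym hA1 hU.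
have [y hy [d1 d2']] := local hA1 hA2 (piv_rel hU) hx.
exists y; split => //; split; rewrite DA_RT.
- have := piv_det ([set x; y]) hQ1.
  have -> : symdiff [set x; y] B1 = symdiff B1 [set x; y].
    by apply/setP => z; rewrite !symdiffE addbC.
  by move=> <-; rewrite mulf_neq0 // -det_principal_RT det_pair.
- have := piv_det ([set x; y]) hU.
  rewrite -det_principal_RT det_pair => e.
  have := piv_det (symdiff [set x; y] U) hQ1.
  have -> : symdiff (symdiff [set x; y] U) B1 = symdiff B2 [set x; y].
    apply/setP => z; rewrite !symdiffE.
    by case: (z \in B1); case: (z \in B2); case: (z \in [set x; y]).
  by move=> <-; rewrite mulf_neq0 // -e mulf_neq0.
Qed.
End Gen.

Unset Implicit Arguments.
Local Close Scope ring_scope.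

Theorem proposition2p31 (K : finFieldType) (Hchar : (2%N \in [pchar K]%R))
  (E : finType) (B : {set {set E}}) :
  delta_matroid B -> representable_over K B -> strong_delta_matroid B.
Proof.
move=> [hne _] [A [X [hsym hB]]]; subst B.
have hA : forall e f, A e f = A f e.
  case: hsym => [h|[h _]] e f; first exact: h.
  by rewrite (h e f) (char2_opp Hchar).
split=> // B1 B2 x /imsetP [C1 hC1 ->] /imsetP [C2 hC2 ->] hx.
have hx' : x \in symdiff C1 C2.
  move: hx; rewrite !symdiffE.
  by case: (x \in C1); case: (x \in C2); case: (x \in X).
have [y [hy [h1 h2]]] := strong_DA Hchar hA hC1 hC2 hx'.
exists y; split; [|split].
- move: hy; rewrite !symdiffE.
  by case: (y \in C1); case: (y \in C2); case: (y \in X).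
- apply/imsetP; exists (symdiff C1 [set x; y]) => //.
  apply/setP => z; rewrite !symdiffE.
  by case: (z \in C1); case: (z \in X); case: (z \in [set x; y]).
- apply/imsetP; exists (symdiff C2 [set x; y]) => //.
  apply/setP => z; rewrite !symdiffE.
  by case: (z \in C2); case: (z \in X); case: (z \in [set x; y]).
Qed.
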